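(* In the setting described in the context (node-symmetric conflict graph $G$, channel states in $\{0,1\}$, $q_J=q_K$ whenever $G_J\cong G_K$), if all primaries use the strategy $\mathrm{SP}_{sym}$, then every node $a\in V$ is offered by a primary with the same probability $\alpha_a$, and consequently the expected payoff a primary obtains at a node where it offers its channel is the same for every node of $G$.
   Context: Model. $l$ primaries; $m$ secondaries at each node of $G=(V,E)$, integers $1\le m<l$. Each primary's channel state vector $J\in\{0,1\}^V$ (1 = available) has probability $q_J$, i.i.d. across primaries, with $q_{(0,\dots,0)}>0$; $G_J$ is the subgraph induced by $\{a:J_a=1\}$. Constants $c,v$; $g_1$ strictly increasing continuous, $f_1=g_1^{-1}$. At each node the $\min(Y,m)$ lowest-penalty offers among the $Y$ offers with penalty $\le v$ are sold (ties uniformly random); a sale at penalty $x$ earns $f_1(x)-c$. $G$ is node symmetric: for all $a,b$ there is an automorphism $F$ of $G$ with $F(a)=b$. $\mathrm{SP}_{sym}$: with state vector $J\ne0$, a primary selects each maximum (largest-cardinality) independent set of $G_J$ with equal probability and no other set; at a selected node $a$ it draws its penalty from the CDF $\phi^{(a)}$ with $\phi^{(a)}(x)=0$ for $x<g_1(p_a)$, $\frac1{\alpha_a}w^{-1}\!\left(\frac{f_1(x)-p_a}{f_1(x)-c}\right)$ for $g_1(p_a)\le x\le v$, $1$ for $x>v$, where $\alpha_a$ is the probability the selection rule offers at $a$, $p_a=c+(f_1(v)-c)W(\alpha_a)$, $w(x)=\sum_{i=m}^{l-1}\binom{l-1}{i}x^i(1-x)^{l-1-i}$, $W=1-w$. 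*)

(* Defs.v *)
From HB Require Import structures.
From mathcomp Require Import all_boot all_order all_algebra.
From mathcomp Require Import boolp reals.
From mathcomp Require classical_sets.
Set Implicit Arguments. Unset Strict Implicit. Unset Printing Implicit Defensive.
Import Order.TTheory GRing.Theory Num.Theory.
Local Open Scope ring_scope.

Section Graphs.
Variable V : finType.
Variable e : rel V.

Definition simple_graph := symmetric e /\ irreflexive e.

Definition automorphism (F : V -> V) := bijective F /\ forall x y, e (F x) (F y) = e x y.

Definition node_symmetric := forall a b : V, exists F, automorphism F /\ F a = b.

Definition induced_iso (J K : {set V}) :=
  exists h : V -> V, [/\ {in J &, injective h}, h @: J = K &
                       {in J &, forall x y, e (h x) (h y) = e x y}].

Definition independent (I : {set V}) := [forall x in I, forall y in I, ~~ e x y].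

Definition max_indep (J : {set V}) : {set {set V}} :=
  [set I : {set V} | [&& independent I, I \subset J &
     [forall I' : {set V}, (independent I' && (I' \subset J)) ==> (#|I'| <= #|I|)%N]]].
End Graphs.

Section Model.
Variable R : realType.
Variable V : finType.
Variable e : rel V.

(* probability that a primary playing SP_sym offers at node a:
   sum over nonzero state vectors J of q_J times the probability that a maximum
   independent set of G_J chosen uniformly at random contains a *)
Definition alpha (q : {set V} -> R) (a : V) : R :=
  \sum_(J : {set V} | J != set0)
     q J * (#|[set I in max_indep e J | a \in I]|%:R / #|max_indep e J|%:R).
End Model.

Section Payoff.
Variable R : realType.
Variables (l m : nat).

(* w(x) = P(Bin(l-1,x) >= m), W = 1 - w *)
Definition w (x : R) : R :=
  \sum_(m <= i < l) ('C(l.-1, i))%:R * x ^+ i * (1 - x) ^+ (l.-1 - i).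
Definition W (x : R) : R := 1 - w x.

Definition winv (y : R) : R := classical_sets.xget 0 (fun x : R => 0 <= x <= 1 /\ w x = y).

Variables (c v : R) (f1 g1 : R -> R).

Definition price (al : R) : R := c + (f1 v - c) * W al.

Definition phi (al : R) (x : R) : R :=
  if x < g1 (price al) then 0
  else if x <= v then al^-1 * winv ((f1 x - price al) / (f1 x - c))
  else 1.

(* payoff of a primary offering at penalty x at a node offered (by each other primary)
   with probability al, the other l-1 primaries using phi: the offer is sold iff fewer
   than m of the other l-1 primaries offer there at a lower penalty (ties have prob. 0),
   and x <= v. *)
Definition payoff (al : R) (x : R) : R :=
  if x <= v then (f1 x - c) * W (al * phi al x) else 0.
End Payoff.

Definition continuousR (R : realType) (g : R -> R) :=
  forall x eps : R, 0 < eps -> exists2 delta : R, 0 < delta &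
    forall y, `|y - x| < delta -> `|g y - g x| < eps.

(* Main.v *)
Require Import Defs.
From HB Require Import structures.
From mathcomp Require Import all_boot all_order all_algebra.
From mathcomp Require Import boolp reals.
Import Order.TTheory GRing.Theory Num.Theory.
Local Open Scope ring_scope.

Section Aux.
Variable V : finType.
Variable e : rel V.

Lemma indep_im (F : V -> V) (I : {set V}) : (forall x y, e (F x) (F y) = e x y) ->
  independent e I -> independent e (F @: I).
Proof.
move=> hF /forallP hI; apply/forallP => x; apply/implyP => /imsetP [x' x'I ->].
apply/forallP => y; apply/implyP => /imsetP [y' y'I ->].
rewrite hF. by have /implyP/(_ x'I)/forallP/(_ y')/implyP/(_ y'I) := hI x'.
Qed.

Lemma imset_cancel (F G : V -> V) (A : {set V}) : cancel F G -> G @: (F @: A) = A.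
Proof.
move=> FK; rewrite -imset_comp; apply/setP => x; apply/imsetP/idP.
  by case=> y yA -> /=; rewrite FK.
by move=> xA; exists x => //=; rewrite FK.
Qed.

Lemma maxind_im (F G : V -> V) (J I : {set V}) : cancel F G -> cancel G F ->
  (forall x y, e (F x) (F y) = e x y) ->
  I \in max_indep e J -> F @: I \in max_indep e (F @: J).
Proof.
move=> FK GK hF; rewrite !inE => /and3P [iI sIJ /forallP mx].
have hG : forall x y, e (G x) (G y) = e x y.
  by move=> x y; rewrite -hF !GK.
rewrite indep_im // imsetS //=; apply/forallP => I'; apply/implyP => /andP [iI' sI'].
have := mx (G @: I'); rewrite indep_im //= -(@imset_cancel F G J FK) imsetS //=.
rewrite !card_imset //; by [apply: can_inj GK | apply: can_inj FK].
Qed.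

Lemma maxind_eq (F G : V -> V) (J : {set V}) : cancel F G -> cancel G F ->
  (forall x y, e (F x) (F y) = e x y) ->
  max_indep e (F @: J) = (fun I : {set V} => F @: I) @: max_indep e J.
Proof.
move=> FK GK hF.
have hG : forall x y, e (G x) (G y) = e x y by move=> x y; rewrite -hF !GK.
apply/setP => I; apply/idP/imsetP.
  move=> /(@maxind_im G F _ I GK FK hG); rewrite imset_cancel // => h.
  by exists (G @: I) => //; rewrite imset_cancel.
by case=> I' hI' ->; apply: maxind_im.
Qed.

Lemma alpha_aut (R : realType) (q : {set V} -> R) (F G : V -> V) (a : V) :
  cancel F G -> cancel G F -> (forall x y, e (F x) (F y) = e x y) ->
  (forall J : {set V}, q (F @: J) = q J) ->
  alpha e q (F a) = alpha e q a.
Proof.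
move=> FK GK hF hq; rewrite /alpha (reindex_inj (imset_inj (can_inj FK))) /=.
apply: eq_big => [J|J _]; first by rewrite imset_eq0.
rewrite hq (@maxind_eq F G) // card_imset; last exact: imset_inj (can_inj FK).
congr (_ * (_ / _)); congr (_%:R).
have -> : [set I in [set F @: I0 | I0 : {set V} in max_indep e J] | F a \in I] =
  (fun I : {set V} => F @: I) @: [set I in max_indep e J | a \in I].
  apply/setP => I; rewrite inE; apply/andP/imsetP.
    case=> /imsetP [I' hI' ->] /imsetP [x xI' /(can_inj FK) ->].
    by exists I' => //; rewrite inE hI'.
  case=> I' ; rewrite inE => /andP [hI' aI'] ->; split.
    by apply/imsetP; exists I'.
  by apply/imsetP; exists a.
by rewrite card_imset //; exact: imset_inj (can_inj FK).
Qed.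
End Aux.

Theorem lemma12 (R : realType) (V : finType) (e : rel V)
  (l m : nat) (c v : R) (g1 f1 : R -> R) (q : {set V} -> R) :
  simple_graph e -> node_symmetric e ->
  (1 <= m)%N -> (m < l)%N ->
  (forall x y, x < y -> g1 x < g1 y) -> continuousR g1 ->
  (forall x, f1 (g1 x) = x) ->
  (forall J, 0 <= q J) -> \sum_(J : {set V}) q J = 1 -> 0 < q set0 ->
  (forall J K, induced_iso e J K -> q J = q K) ->
  (forall a b : V, alpha e q a = alpha e q b) /\
  (forall a b : V,
     phi l m c v f1 g1 (alpha e q a) = phi l m c v f1 g1 (alpha e q b) /\
     payoff l m c v f1 g1 (alpha e q a) = payoff l m c v f1 g1 (alpha e q b)).
Proof.
move=> _ hsym _ _ _ _ _ _ _ _ hiso.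
have H : forall a b : V, alpha e q a = alpha e q b.
  move=> a b; have [F [[[G FK GK] hF] <-]] := hsym a b.
  symmetry; apply: (@alpha_aut V e R q F G a FK GK hF) => J; symmetry; apply: hiso.
  exists F; split => //.
  - by move=> x y _ _; apply: (can_inj FK).
split => // a b; by rewrite (H a b).
Qed.
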